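(* Let $(W,S)$ be a hyperbolic reflection group in $\mathbb{H}^n$ with a convex polytope $P$ as fundamental domain, and let $R$ be its set of reflections. Then the set $\mathcal{H}_\infty=\{\gamma(\infty)\mid \gamma\subseteq H_r\text{ a geodesic ray},\ r\in R\}$ is dense in $\partial\mathbb{H}^n$.
   Context: $(W,S)$ is a discrete group generated by the set $S$ of reflections across the walls of a Coxeter polyhedron $P$ (a convex polyhedron whose intersecting bounding hyperplanes meet at dihedral angles that are submultiples of $\pi$), with $P$ a strict fundamental domain, and whose Coxeter system does not split as a direct product of spherical and affine reflection groups. A convex polytope (possibly with ideal vertices) is, in the hyperboloid model $\mathbb{H}^n\subseteq\mathbb{R}^{n,1}$, the intersection of $\mathbb{H}^n$ with a convex polyhedral cone contained in $\{v\mid\langle v|v\rangle\le0,\ v_{n+1}>0\}$. $R=\{wsw^{-1}\mid w\in W,s\in S\}$ and $H_r$ is the hyperplane fixed by $r$. $\partial\mathbb{H}^n$ is the visual boundary with the cone topology and $\gamma(\infty)$ the endpoint of a ray $\gamma$. *)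

(* Defs.v *)
From HB Require Import structures.
From mathcomp Require Import all_boot all_order all_algebra.
From mathcomp Require Import all_classical all_reals all_analysis.
Set Implicit Arguments. Unset Strict Implicit. Unset Printing Implicit Defensive.
Import Order.TTheory GRing.Theory Num.Theory.
Import numFieldNormedType.Exports.
Local Open Scope classical_set_scope.
Local Open Scope ring_scope.

Section Hyperboloid.
Variables (R : realType) (n : nat).
Notation V := 'rV[R]_(n.+1).

Definition lastc (x : V) : R := x 0 ord_max.

Definition lor (x y : V) : R :=
  \sum_(i < n) x 0 (widen_ord (leqnSn n) i) * y 0 (widen_ord (leqnSn n) i)
  - lastc x * lastc y.

Definition Hyp : set V := [set x | lor x x = -1 /\ 0 < lastc x].

(* visual boundary dH^n, realised as the null vectors normalised by x_{n+1} = 1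
   (the sphere at infinity of the projective/Klein model), with the topology
   induced from R^{n+1}: this is the cone topology. *)
Definition Bdry : set V := [set x | lor x x = 0 /\ lastc x = 1].

Definition refl (v : V) (x : V) : V := x - ((2 * lor x v) / lor v v) *: v.

(* convex polytope (possibly with ideal vertices): intersection of H^n with a
   polyhedral cone {v | <v|e_i> <= 0 for all i} contained (apart from 0) in
   {<v|v> <= 0, v_{n+1} > 0}; the polytope has nonempty interior. *)
Definition polyCone k (e : 'I_k -> V) : set V := [set v | forall i, lor v (e i) <= 0].
Definition polytope k (e : 'I_k -> V) : set V := Hyp `&` polyCone e.

Definition is_convex_polytope k (e : 'I_k -> V) : Prop :=
  (forall i, 0 < lor (e i) (e i)) /\
  (forall v, v != 0 -> polyCone e v -> lor v v <= 0 /\ 0 < lastc v) /\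
  (exists x, Hyp x /\ forall i, lor x (e i) < 0).

(* elements of W = <S>: products of the wall reflections s_i = refl (e i)
   (each s_i is an involution, so these words form the generated group) *)
Definition word k (e : 'I_k -> V) (s : seq 'I_k) : V -> V :=
  foldr (fun i f => refl (e i) \o f) id s.

Definition strict_fundamental_domain k (e : 'I_k -> V) : Prop :=
  (forall x, Hyp x -> exists s y, polytope e y /\ x = word e s y) /\
  (forall s x, polytope e x -> polytope e (word e s x) -> word e s x = x).

(* the set R of reflections w s w^{-1}, w in W, s in S
   (w^{-1} is the reversed word) *)
Definition reflections k (e : 'I_k -> V) : set (V -> V) :=
  [set r | exists (s : seq 'I_k) (i : 'I_k),
     r = word e s \o refl (e i) \o word e (rev s)].

Definition fixhyp (r : V -> V) : set V := [set x | Hyp x /\ r x = x].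

Definition cosh (t : R) : R := (expR t + expR (- t)) / 2.
Definition sinh (t : R) : R := (expR t - expR (- t)) / 2.
Definition ray (p u : V) (t : R) : V := cosh t *: p + sinh t *: u.
Definition is_ray (p u : V) : Prop := Hyp p /\ lor u u = 1 /\ lor p u = 0.

Definition endpoint (p u : V) : V := (lastc (p + u))^-1 *: (p + u).

Definition Hinfty k (e : 'I_k -> V) : set V :=
  [set xi | exists r p u, reflections e r /\ is_ray p u /\
     (forall t, 0 <= t -> fixhyp r (ray p u t)) /\ xi = endpoint p u].

End Hyperboloid.

(* Main.v *)
Require Import Defs.
From HB Require Import structures.
From mathcomp Require Import all_boot all_order all_algebra.
From mathcomp Require Import all_classical all_reals all_analysis.
From mathcomp Require Import ring lra.
Import Order.TTheory GRing.Theory Num.Theory.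
Import numFieldNormedType.Exports.
Local Open Scope classical_set_scope.
Local Open Scope ring_scope.
Set Implicit Arguments. Unset Strict Implicit. Unset Printing Implicit Defensive.

Section Lor.
Variables (R : realType) (n : nat).
Notation V := 'rV[R]_(n.+1).
Implicit Types (x y z v : V).

Lemma lorC x y : lor x y = lor y x.
Proof.
rewrite /lor /lastc; congr (_ - _); last by rewrite mulrC.
by apply: eq_bigr => i _; rewrite mulrC.
Qed.

Lemma lorDl x y z : lor (x + y) z = lor x z + lor y z.
Proof.
rewrite /lor /lastc !mxE.
rewrite (eq_bigr (fun i => x 0 (widen_ord (leqnSn n) i) * z 0 (widen_ord (leqnSn n) i)
  + y 0 (widen_ord (leqnSn n) i) * z 0 (widen_ord (leqnSn n) i))); last first.
  by move=> i _; rewrite !mxE mulrDl.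
rewrite big_split /=; ring.
Qed.

Lemma lorZl a x z : lor (a *: x) z = a * lor x z.
Proof.
rewrite /lor /lastc !mxE.
rewrite (eq_bigr (fun i => a * (x 0 (widen_ord (leqnSn n) i) * z 0 (widen_ord (leqnSn n) i)))); last first.
  by move=> i _; rewrite !mxE mulrA.
rewrite -mulr_sumr; ring.
Qed.

Lemma lorNl x z : lor (- x) z = - lor x z.
Proof. by rewrite -scaleN1r lorZl mulN1r. Qed.

Lemma lorBl x y z : lor (x - y) z = lor x z - lor y z.
Proof. by rewrite lorDl lorNl. Qed.

Lemma lor0l z : lor 0 z = 0.
Proof. by rewrite -(scale0r (0 : V)) lorZl mul0r. Qed.

Lemma lorDr x y z : lor z (x + y) = lor z x + lor z y.
Proof. by rewrite lorC lorDl !(lorC z). Qed.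
Lemma lorZr a x z : lor z (a *: x) = a * lor z x.
Proof. by rewrite lorC lorZl lorC. Qed.
Lemma lorNr x z : lor z (- x) = - lor z x.
Proof. by rewrite lorC lorNl lorC. Qed.
Lemma lorBr x y z : lor z (x - y) = lor z x - lor z y.
Proof. by rewrite lorDr lorNr. Qed.
Lemma lor0r z : lor z 0 = 0.
Proof. by rewrite lorC lor0l. Qed.

Lemma lastcD x y : lastc (x + y) = lastc x + lastc y.
Proof. by rewrite /lastc mxE. Qed.
Lemma lastcZ a x : lastc (a *: x) = a * lastc x.
Proof. by rewrite /lastc mxE. Qed.
Lemma lastcN x : lastc (- x) = - lastc x.
Proof. by rewrite /lastc mxE. Qed.
Lemma lastcB x y : lastc (x - y) = lastc x - lastc y.
Proof. by rewrite lastcD lastcN. Qed.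

Lemma lor_spatial y : lastc y = 0 -> 0 <= lor y y.
Proof.
move=> h; rewrite /lor h mulr0 subr0; apply: sumr_ge0 => i _; exact: sqr_ge0.
Qed.

Lemma future x z : lor x x < 0 -> 0 < lastc z -> lor z z = 0 -> lor x z < 0 ->
  0 < lastc x.
Proof.
move=> hx hz hzz hxz; rewrite ltNge; apply/negP => hl.
pose c := - lastc x / lastc z.
have c0 : 0 <= c by rewrite /c mulr_ge0 // ?oppr_ge0 // invr_ge0 ltW.
have hl0 : lastc (x + c *: z) = 0.
  by rewrite lastcD lastcZ /c mulrAC -mulrA divff ?mulr1 ?subrr // gt_eqF.
have := lor_spatial hl0.
rewrite !lorDl !lorDr !lorZl !lorZr hzz (lorC z x).
have : c * lor x z <= 0 by rewrite mulr_ge0_le0 // ltW.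
lra.
Qed.

Definition o : V := \row_j ((j == ord_max)%:R).

Lemma lor_o x : lor o x = - lastc x.
Proof.
rewrite /lor big1 ?sub0r; last first.
  move=> i _; rewrite mxE.
  have -> : (widen_ord (leqnSn n) i == ord_max) = false.
    by apply/negbTE; rewrite -val_eqE /= neq_ltn ltn_ord.
  by rewrite mul0r.
by rewrite /lastc mxE eqxx mul1r.
Qed.

Lemma lastc_o : lastc o = 1.
Proof. by rewrite /lastc mxE eqxx. Qed.

Lemma refl_fix v x : lor x v = 0 -> refl v x = x.
Proof. by move=> h; rewrite /refl h mulr0 mul0r scale0r subr0. Qed.

Lemma refl0 v : refl v 0 = 0.
Proof. by rewrite refl_fix // lor0l. Qed.

Lemma lor_refl v x y : lor v v != 0 -> lor (refl v x) (refl v y) = lor x y.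
Proof.
move=> hv; rewrite /refl !lorBl !lorBr !lorZl !lorZr. rewrite (lorC v y).
field; exact: hv.
Qed.

Lemma refl_invol v x : lor v v != 0 -> refl v (refl v x) = x.
Proof.
move=> hv; rewrite {1}/refl.
have -> : lor (refl v x) v = - lor x v.
  rewrite /refl lorBl lorZl; field; exact: hv.
rewrite /refl; apply/rowP => j; rewrite !mxE.
field; exact: hv.
Qed.


Section Word.
Variables (k : nat) (e : 'I_k -> V).
Hypothesis he : forall i, lor (e i) (e i) != 0.

Lemma word_cons i s x : word e (i :: s) x = refl (e i) (word e s x).
Proof. by []. Qed.

Lemma word_rcons s i x : word e (rcons s i) x = word e s (refl (e i) x).
Proof. by elim: s => [|j s IH] //=; rewrite /comp IH. Qed.

Lemma word_lor s x y : lor (word e s x) (word e s y) = lor x y.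
Proof. by elim: s => [|j s IH] //=; rewrite /comp lor_refl. Qed.

Lemma word0 s : word e s 0 = 0.
Proof. by elim: s => [|j s IH] //=; rewrite /comp IH refl0. Qed.

Lemma word_rev s x : word e s (word e (rev s) x) = x.
Proof.
elim: s x => [|j s IH] x //=.
by rewrite rev_cons word_rcons /comp IH refl_invol.
Qed.

Lemma word_rev_lor s x y : lor (word e (rev s) x) y = lor x (word e s y).
Proof. by rewrite -(word_lor s) word_rev. Qed.

Lemma refl_conj_fix s i x : lor x (word e s (e i)) = 0 ->
  (word e s \o refl (e i) \o word e (rev s)) x = x.
Proof.
move=> h; rewrite /comp refl_fix ?word_rev //.
by rewrite word_rev_lor.
Qed.

End Word.

Lemma expR_mulN (t : R) : expR t * expR (- t) = 1.
Proof. by rewrite expRN mulfV // gt_eqF // expR_gt0. Qed.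

Lemma cosh_sinh (t : R) : cosh t ^+ 2 - sinh t ^+ 2 = 1.
Proof.
rewrite /cosh /sinh.
have := expR_mulN t.
set a := expR t; set b := expR (- t) => h.
have -> : ((a + b) / 2) ^+ 2 - ((a - b) / 2) ^+ 2 = a * b by field.
exact: h.
Qed.

Lemma ray_exists v (z : V) : 0 < lor v v -> lor z z = 0 -> lastc z = 1 ->
  lor z v = 0 ->
  exists p u, is_ray p u /\
    (forall t, 0 <= t -> Hyp (ray p u t) /\ lor (ray p u t) v = 0) /\
    z = endpoint p u.
Proof.
move=> hv hz hlz hzv.
have hvz : lor v z = 0 by rewrite lorC.
have Lne : lor v v != 0 by rewrite gt_eqF.
pose c0 := lor o v / lor v v.
pose q := o - c0 *: v.
have hqv : lor q v = 0 by rewrite /q lorBl lorZl /c0; field.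
have hqz : lor q z = -1 by rewrite /q lorBl lorZl hvz lor_o hlz mulr0 subr0.
have hqq : lor q q = -1 - lor o v ^+ 2 / lor v v.
  rewrite /q !lorBl !lorBr !lorZl !lorZr lor_o lastc_o (lorC v o) /c0; field.
  exact: Lne.
have hqq1 : lor q q <= -1.
  rewrite hqq lerBlDr lerDl; apply: divr_ge0; [exact: sqr_ge0| exact: ltW].
pose N := Num.sqrt (- lor q q).
have N0 : 0 < N by rewrite /N sqrtr_gt0; lra.
have NN : N ^+ 2 = - lor q q by rewrite /N sqr_sqrtr //; lra.
pose p := N^-1 *: q.
have hpp : lor p p = -1.
  rewrite /p lorZl lorZr mulrA -expr2 exprVn NN.
  have : lor q q != 0 by apply/negP => /eqP h; lra.
  move=> hq; field; exact: hq.
have hpz : lor p z = - N^-1 by rewrite /p lorZl hqz mulrN1.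
have hpv : lor p v = 0 by rewrite /p lorZl hqv mulr0.
have hlp : 0 < lastc p.
  apply: (future (z := z)); rewrite ?hpp ?hlz ?hpz ?hz //; try lra.
  by rewrite oppr_lt0 invr_gt0.
have Nne : N != 0 by rewrite gt_eqF.
clearbody p.
pose u := N *: z - p.
have hpuN : p + u = N *: z by rewrite /u addrC subrK.
have huu : lor u u = 1.
  rewrite /u !lorBl !lorBr !lorZl !lorZr hz hpp (lorC z p) hpz; field; exact: Nne.
have hpu : lor p u = 0.
  rewrite /u lorBr lorZr hpz hpp; field; exact: Nne.
have huv : lor u v = 0 by rewrite /u lorBl lorZl hzv hpv mulr0 subr0.
have hlu : lastc u = N - lastc p by rewrite /u lastcB lastcZ hlz mulr1.
clearbody u.
exists p, u; split; first by split; [split; [exact: hpp| exact: hlp] | split].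
split.
  move=> t t0; rewrite /ray; split; first split.
  - rewrite !lorDl !lorDr !lorZl !lorZr hpp huu hpu (lorC u p) hpu.
    have := cosh_sinh t; lra.
  - rewrite lastcD !lastcZ hlu.
    have -> : cosh t * lastc p + sinh t * (N - lastc p) =
              (cosh t - sinh t) * lastc p + sinh t * N by ring.
    have -> : cosh t - sinh t = expR (- t) by rewrite /cosh /sinh; field.
    have h1 : 0 < expR (- t) * lastc p by rewrite mulr_gt0 // expR_gt0.
    have h2 : 0 <= sinh t * N.
      apply: mulr_ge0; last exact: ltW.
      rewrite /sinh divr_ge0 // subr_ge0 ler_expR; lra.
    lra.
  - by rewrite lorDl !lorZl hpv huv !mulr0 addr0.
by rewrite /endpoint hpuN lastcZ hlz mulr1 scalerA mulVf // scale1r.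
Qed.


Lemma ord_split (j : 'I_n.+1) : j = ord_max \/ exists i : 'I_n, j = widen_ord (leqnSn n) i.
Proof.
have [->|hj] := eqVneq j ord_max; first by left.
right; have jn : (j < n)%N.
  have := ltn_ord j; rewrite ltnS leq_eqVlt => /orP [/eqP h|//].
  by exfalso; move/eqP: hj; apply; apply: val_inj.
by exists (Ordinal jn); apply: val_inj.
Qed.

Lemma null_last0 y : lor y y = 0 -> lastc y = 0 -> y = 0.
Proof.
move=> h hl; move: h; rewrite /lor hl mulr0 subr0 => hs.
apply/rowP => j; rewrite [RHS]mxE.
case: (ord_split j) => [->|[i ->]]; first exact: hl.
have := @psumr_eq0P _ _ xpredT
  (fun i => y 0 (widen_ord (leqnSn n) i) * y 0 (widen_ord (leqnSn n) i))
  (fun l _ => ltac:(by rewrite /= -expr2 sqr_ge0)) hs i isT.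
by move/eqP; rewrite mulf_eq0 orbb => /eqP.
Qed.

Lemma coord_le1 y : lastc y = 0 -> lor y y = 1 -> forall j, `|y 0 j| <= 1.
Proof.
move=> hl; rewrite /lor hl mulr0 subr0 => hs j.
case: (ord_split j) => [->|[i ->]]; first by rewrite -/(lastc y) hl normr0.
have : y 0 (widen_ord (leqnSn n) i) * y 0 (widen_ord (leqnSn n) i) <= 1.
  rewrite -hs (bigD1 i) //= lerDl; apply: sumr_ge0 => l _.
  by rewrite -expr2 sqr_ge0.
set c := y 0 _ => hc.
have [c0|c0] := leP 0 c; [rewrite ger0_norm // | rewrite ltr0_norm //]; nra.
Qed.

Definition E (j : 'I_n.+1) : V := \row_l ((l == j)%:R).

Lemma lor_E (i : 'I_n) x : lor (E (widen_ord (leqnSn n) i)) x = x 0 (widen_ord (leqnSn n) i).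
Proof.
rewrite /lor (bigD1 i) //= big1 ?addr0; last first.
  move=> l hl; rewrite mxE.
  have -> : (widen_ord (leqnSn n) l == widen_ord (leqnSn n) i) = false.
    by apply/negbTE; move: hl; rewrite -!val_eqE.
  by rewrite mul0r.
have -> : lastc (E (widen_ord (leqnSn n) i)) = 0.
  rewrite /lastc mxE.
  have -> : (ord_max == widen_ord (leqnSn n) i) = false.
    by apply/negbTE; rewrite -val_eqE /= neq_ltn ltn_ord orbT.
  by [].
by rewrite mxE eqxx mul1r mul0r subr0.
Qed.

Lemma lastc_E (i : 'I_n) : lastc (E (widen_ord (leqnSn n) i)) = 0.
Proof.
rewrite /lastc mxE.
have -> : (ord_max == widen_ord (leqnSn n) i) = false.
  by apply/negbTE; rewrite -val_eqE /= neq_ltn ltn_ord orbT.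
by [].
Qed.

Lemma exists_perp (a : V) : (2 <= n)%N -> lastc a = 0 ->
  exists b : V, lastc b = 0 /\ lor b b = 1 /\ lor a b = 0.
Proof.
move=> hn ha.
have h0 : (0 < n)%N by apply: leq_trans hn.
have h1 : (1 < n)%N by [].
pose i0 := widen_ord (leqnSn n) (Ordinal h0).
pose i1 := widen_ord (leqnSn n) (Ordinal h1).
have E01 : lor (E i0) (E i1) = 0 by rewrite lor_E mxE.
have E00 : lor (E i0) (E i0) = 1 by rewrite lor_E mxE eqxx.
have E11 : lor (E i1) (E i1) = 1 by rewrite lor_E mxE eqxx.
pose al := a 0 i0; pose be := a 0 i1.
have ha0 : lor a (E i0) = al by rewrite lorC lor_E.
have ha1 : lor a (E i1) = be by rewrite lorC lor_E.
have [hz|hnz] := eqVneq (al ^+ 2 + be ^+ 2) 0.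
  have al0 : al = 0.
    apply/eqP; rewrite -sqrf_eq0 eq_le sqr_ge0 andbT; move: hz.
    have := sqr_ge0 be; lra.
  exists (E i0); split; first exact: lastc_E.
  by split => //; rewrite ha0.
pose w := be *: E i0 - al *: E i1.
have hw : lor w w = al ^+ 2 + be ^+ 2.
  rewrite /w !lorBl !lorBr !lorZl !lorZr E00 E11 E01 (lorC (E i1)) E01; ring.
have hpos : 0 < al ^+ 2 + be ^+ 2.
  by rewrite lt_def hnz addr_ge0 // sqr_ge0.
pose N := Num.sqrt (al ^+ 2 + be ^+ 2).
have N0 : 0 < N by rewrite sqrtr_gt0.
have NN : N ^+ 2 = al ^+ 2 + be ^+ 2 by rewrite sqr_sqrtr // ltW.
exists (N^-1 *: w); split.
  by rewrite lastcZ /w lastcB !lastcZ !lastc_E !mulr0 subr0 mulr0.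
split.
  rewrite lorZl lorZr hw -NN; field; by rewrite gt_eqF.
rewrite lorZr /w lorBr !lorZr ha0 ha1; ring.
Qed.

Lemma quad_pos (t c d : R) : 0 < t -> t * (`|d| + 1) < c ->
  0 < t * c + (t * c + t * (t * d)).
Proof.
move=> t0 h.
have h1 : t * (t * (`|d| + 1)) < t * c by rewrite ltr_pM2l.
have h2 : 0 <= t * t * (d + `|d|).
  apply: mulr_ge0; first by apply: mulr_ge0; exact: ltW.
  by have := ler_norm (- d); rewrite normrN; lra.
have h3 : 0 < t * t by rewrite mulr_gt0.
have c0 : 0 < c.
  apply: lt_trans h; rewrite mulr_gt0 // ltr_pwDr //.
have h4 : 0 < t * c by rewrite mulr_gt0.
move: h1 h2; rewrite !mulrDr !mulr1 !mulrA; lra.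
Qed.

Lemma cone_contra k (e : 'I_k -> V) (z : V) :
  (forall v, v != 0 -> polyCone e v -> lor v v <= 0 /\ 0 < lastc v) ->
  lor z z = 0 -> z != 0 -> (forall i, lor z (e i) < 0) -> False.
Proof.
move=> hc hz hz0 hi.
have hl : lastc z != 0 by apply: contra hz0 => /eqP h; apply/eqP; exact: null_last0.
pose y := - (lastc z) *: o.
have hzy : lor z y = lastc z ^+ 2 by rewrite /y lorZr lorC lor_o mulrNN expr2.
clearbody y.
have c0 : 0 < lastc z ^+ 2 by rewrite lt_def sqr_ge0 sqrf_eq0 hl.
set c := lastc z ^+ 2 in hzy c0.
pose d := lor y y.
have : \forall t \near (0:R)^'+, 0 < t /\ t < c / (`|d| + 1) /\
   forall i, t < - lor z (e i) / (`|lor y (e i)| + 1).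
  near=> t.
  split; first by near: t; exact: nbhs_right_gt.
  split; first by near: t; apply: nbhs_right_lt; rewrite divr_gt0 // ltr_pwDr.
  near: t; apply: filter_forall => i; apply: nbhs_right_lt.
  by rewrite divr_gt0 ?oppr_gt0 // ltr_pwDr.
move=> /filter_ex [t [t0 [td ti]]].
have [] := hc (z + t *: y).
- apply/negP => /eqP h0.
  have : lor (z + t *: y) (z + t *: y) = 0 by rewrite h0 lor0l.
  rewrite !lorDl !lorDr !lorZl !lorZr hz (lorC y z) hzy -/d.
  have hd1 : 0 < `|d| + 1 by rewrite ltr_pwDr.
  have : t * (`|d| + 1) < c by rewrite -ltr_pdivlMr.
  move/(quad_pos t0); lra.
- move=> i; rewrite /polyCone /= lorDl lorZl.
  have hd1 : 0 < `|lor y (e i)| + 1 by rewrite ltr_pwDr.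
  have := ti i; rewrite ltr_pdivlMr // => h.
  have := ler_norm (lor y (e i)); have := normr_ge0 (lor y (e i)); nra.
- rewrite !lorDl !lorDr !lorZl !lorZr hz (lorC y z) hzy -/d.
  have hd1 : 0 < `|d| + 1 by rewrite ltr_pwDr.
  have : t * (`|d| + 1) < c by rewrite -ltr_pdivlMr.
  move/(quad_pos t0); lra.
Unshelve. all: by end_near.
Qed.


Definition circ (a b : V) (t : R) : V :=
  o + (1 + t ^+ 2)^-1 *: ((1 - t ^+ 2) *: a + (2 * t) *: b).

Lemma one_sqr_gt0 (t : R) : 0 < 1 + t ^+ 2.
Proof. by have := sqr_ge0 t; lra. Qed.

Section Circ.
Variables (a b : V).
Hypotheses (la : lastc a = 0) (lb : lastc b = 0) (aa : lor a a = 1)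
  (bb : lor b b = 1) (ab : lor a b = 0).

Lemma circ_lastc t : lastc (circ a b t) = 1.
Proof. by rewrite /circ lastcD !lastcZ lastcD !lastcZ la lb lastc_o; ring. Qed.

Lemma circ_lor t f : lor (circ a b t) f =
  lor o f + ((1 - t ^+ 2) * lor a f + 2 * t * lor b f) / (1 + t ^+ 2).
Proof.
have := one_sqr_gt0 t => h.
rewrite /circ !(lorDl, lorZl); field; by rewrite gt_eqF.
Qed.

Lemma circ_null t : lor (circ a b t) (circ a b t) = 0.
Proof.
have := one_sqr_gt0 t => h.
have h0 : 1 + t ^+ 2 != 0 by rewrite gt_eqF.
have ho : lor o (circ a b t) = -1 by rewrite lor_o circ_lastc.
have ha : lor a (circ a b t) = (1 - t ^+ 2) / (1 + t ^+ 2).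
  rewrite lorC circ_lor lor_o la aa (lorC b a) ab; field; exact: h0.
have hb : lor b (circ a b t) = 2 * t / (1 + t ^+ 2).
  rewrite lorC circ_lor lor_o lb ab bb; field; exact: h0.
rewrite circ_lor ho ha hb; field; exact: h0.
Qed.

Lemma circ_coord t j : (o + a) 0 j - circ a b t 0 j =
  (2 * t ^+ 2 * a 0 j - 2 * t * b 0 j) / (1 + t ^+ 2).
Proof.
have := one_sqr_gt0 t => h.
rewrite /circ !mxE; field; by rewrite gt_eqF.
Qed.

End Circ.

Lemma near_wall k (e : 'I_k -> V) (xi : V) (eps : R) :
  (2 <= n)%N -> is_convex_polytope e ->
  (forall x, Hyp x -> exists s y, polytope e y /\ x = word e s y) ->
  Bdry xi -> 0 < eps ->
  exists z s i, lor z z = 0 /\ lastc z = 1 /\ lor z (word e s (e i)) = 0 /\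
    forall j, `|xi 0 j - z 0 j| < eps.
Proof.
move=> hn [he [hcone _]] hcov [hxx hlx] eps0.
have heN : forall i, lor (e i) (e i) != 0 by move=> i; rewrite gt_eqF.
pose a := xi - o.
have la : lastc a = 0 by rewrite /a lastcB hlx lastc_o subrr.
have aa : lor a a = 1.
  rewrite /a !lorBl !lorBr hxx (lorC xi o) !lor_o hlx lastc_o; ring.
have xiE : xi = o + a by rewrite /a addrC subrK.
clearbody a.
have [b [lb [bb ab]]] := exists_perp hn la.
have hoxi : lor o xi = -1 by rewrite lor_o hlx.
have haxi : lor a xi = 1.
  by rewrite xiE lorDr (lorC a o) lor_o la aa oppr0 add0r.
have hbxi : lor b xi = 0.
  by rewrite xiE lorDr (lorC b o) lor_o lb (lorC b a) ab oppr0 add0r.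
have ca := coord_le1 la aa; have cb := coord_le1 lb bb.
pose t0 := Num.min 1 (eps / 8).
have t00 : 0 < t0 by rewrite /t0 lt_min ltr01 divr_gt0.
have t01 : t0 <= 1 by rewrite /t0 ge_min lexx.
have t0e : t0 <= eps / 8 by rewrite /t0 ge_min lexx orbT.
have [x2 x2E] : exists x2, x2 = circ a b t0 by eexists.
have x2n : lor x2 x2 = 0 by rewrite x2E circ_null.
have lx2 : lastc x2 = 1 by rewrite x2E circ_lastc.
have hx2 : lor x2 xi = - 2 * t0 ^+ 2 / (1 + t0 ^+ 2).
  rewrite x2E circ_lor // hoxi haxi hbxi.
  have := one_sqr_gt0 t0 => h; field; by rewrite gt_eqF.
have [m mE] : exists m, m = xi + x2 by eexists.
have hmm : lor m m < 0.
  rewrite mE !lorDl !lorDr hxx x2n (lorC xi x2) hx2.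
  have h := one_sqr_gt0 t0.
  have : 0 < 2 * t0 ^+ 2 / (1 + t0 ^+ 2).
    by rewrite divr_gt0 // mulr_gt0 // exprn_gt0.
  rewrite !mulNr; lra.
pose M := Num.sqrt (- lor m m).
have M0 : 0 < M by rewrite sqrtr_gt0; lra.
have MM : M ^+ 2 = - lor m m by rewrite sqr_sqrtr //; lra.
pose pm := M^-1 *: m.
have hpm : Hyp pm.
  split.
    rewrite /pm lorZl lorZr mulrA -expr2 exprVn MM.
    field; by rewrite lt_eqF.
  rewrite /pm lastcZ mE lastcD hlx lx2.
  by rewrite mulr_gt0 // ?invr_gt0 //; lra.
have [s [y [[_ hyc] hpy]]] := hcov _ hpm.
pose f i := word e s (e i).
have hmf : forall i, lor m (f i) <= 0.
  move=> i; have := hyc i; rewrite -(word_lor heN s) -hpy /pm lorZl.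
  by rewrite pmulr_rle0 // invr_gt0.
have [i hi] : exists i, 0 <= lor xi (f i).
  case: (boolP [exists i, 0 <= lor xi (f i)]) => [/existsP [i hi]|/existsPn hN].
    by exists i.
  exfalso.
  pose z := word e (rev s) xi.
  apply: (cone_contra hcone (z := z)).
  - by rewrite /z word_lor.
  - apply/negP => /eqP hz.
    have : xi = 0 by rewrite -(word_rev heN s xi) -/z hz word0.
    by move=> h0; move: hlx; rewrite h0 /lastc mxE => /eqP; rewrite eq_sym oner_eq0.
  - move=> i; rewrite /z word_rev_lor //.
    by have := hN i; rewrite -ltNge.
have [A0 A0E] : exists c, c = lor o (f i) by eexists.
have [Aa AaE] : exists c, c = lor a (f i) by eexists.
have [Ab AbE] : exists c, c = lor b (f i) by eexists.
have hA : lor xi (f i) = A0 + Aa by rewrite xiE lorDl A0E AaE.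
have hB : lor x2 (f i) <= - lor xi (f i).
  by have := hmf i; rewrite mE lorDl; lra.
pose P : {poly R} := - ((A0 + Aa)%:P + (2 * Ab) *: 'X + (A0 - Aa) *: 'X^2).
have hP : forall t, P.[t] = - ((1 + t ^+ 2) * lor (circ a b t) (f i)).
  move=> t; rewrite circ_lor // /P hornerN !hornerD hornerC !hornerZ hornerX hornerXn -A0E -AaE -AbE.
  have := one_sqr_gt0 t => h; field; by rewrite gt_eqF.
have [ts /andP [ts0 ts1] hroot] : exists2 x, 0 <= x <= t0 & root P x.
  apply: poly_ivt; first exact: ltW.
  rewrite !hP; apply/andP; split.
    have -> : circ a b 0 = xi.
      apply/rowP => j; rewrite xiE /circ !mxE expr2 !mul0r mulr0 !subr0 addr0.
      by rewrite mul0r addr0 invr1 !mul1r.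
    rewrite expr2 mulr0 addr0 mul1r oppr_le0; exact: hi.
  rewrite -x2E oppr_ge0 pmulr_rle0 ?one_sqr_gt0 //; lra.
have hts : lor (circ a b ts) (f i) = 0.
  move: hroot; rewrite /root hP oppr_eq0 mulf_eq0 => /orP [|/eqP //].
  by rewrite gt_eqF // one_sqr_gt0.
exists (circ a b ts), s, i; split; first exact: circ_null.
split; first exact: circ_lastc.
split; first exact: hts.
move=> j; rewrite xiE circ_coord.
have D0 := one_sqr_gt0 ts.
have := ca j; have := cb j; rewrite !ler_norml => /andP [hb1 hb2] /andP [ha1 ha2].
rewrite ltr_norml ltr_pdivrMr // ltr_pdivlMr //; apply/andP; split.
- have h1 : 0 <= ts ^+ 2 * (1 + a 0 j) by rewrite mulr_ge0 ?sqr_ge0 //; lra.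
  have h2 : 0 <= ts * (1 - b 0 j) by rewrite mulr_ge0 //; lra.
  have h3 : ts ^+ 2 <= ts.
    have ts1p : ts <= 1 by lra.
    rewrite expr2; nra.
  have h4 : 0 <= eps * ts ^+ 2 by rewrite mulr_ge0 ?sqr_ge0 //; lra.
  nra.
- have h1 : 0 <= ts ^+ 2 * (1 - a 0 j) by rewrite mulr_ge0 ?sqr_ge0 //; lra.
  have h2 : 0 <= ts * (1 + b 0 j) by rewrite mulr_ge0 //; lra.
  have h3 : ts ^+ 2 <= ts.
    have ts1p : ts <= 1 by lra.
    rewrite expr2; nra.
  have h4 : 0 <= eps * ts ^+ 2 by rewrite mulr_ge0 ?sqr_ge0 //; lra.
  nra.
Qed.

End Lor.

Unset Implicit Arguments.
Set Strict Implicit.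

Theorem mainTheorem10 (R : realType) (n k : nat) (e : 'I_k -> 'rV[R]_(n.+1)) :
  (2 <= n)%N ->
  is_convex_polytope e ->
  strict_fundamental_domain e ->
  @Bdry R n `<=` closure (Hinfty e).
Proof.
move=> hn hcp [hcov _] xi hxi B /nbhs_ballP [eps eps0 hB].
have [z [s [i [hz [hlz [hzv hzx]]]]]] := near_wall hn hcp hcov hxi eps0.
have [he _] := hcp.
have heN : forall i, lor (e i) (e i) != 0 by move=> l; rewrite gt_eqF.
have hv : 0 < lor (word e s (e i)) (word e s (e i)) by rewrite word_lor.
have [p [u [hr [hray hend]]]] := ray_exists hv hz hlz hzv.
exists z; split.
- exists (word e s \o refl (e i) \o word e (rev s)), p, u; split; first by exists s, i.
  split => //; split; last exact: hend.
  move=> t t0; have [hH hl] := hray t t0; split => //; exact: refl_conj_fix.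
- apply: hB; split => // i0 j; rewrite (ord1 i0).
  by rewrite -ball_normE /ball_ /=; exact: hzx.
Qed.
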